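(* Let $I_A$ and $I_B$ be two MatP instances with the same underlying graph $G=(W\cup F,E)$ that differ only in the preference order of a single agent $x\in W\cup F$. Let $e=\{x,y\}\in E$ and let $I_H$ be a hybrid instance of $(I_A,I_B)$ with respect to $e$. Let $M$ be a matching with $e\in M$. Then: (1) if $M$ is popular for $I_H$, then $M$ is robust popular with respect to $I_A$ and $I_B$; (2) if $M$ is dominant for $I_H$, then $M$ is robust dominant with respect to $I_A$ and $I_B$.
   Context: An instance $I$ of matchings under preferences (MatP) consists of a bipartite graph $G^I=(W\cup F,E^I)$ with disjoint finite vertex sets $W$ (workers) and $F$ (firms), whose elements are called agents, together with, for each agent $x$, a strict linear order $\succ_x^I$ (preference order) over the set $N_x^I$ of neighbors of $x$ in $G^I$. A matching is a set of pairwise disjoint edges; $M(x)$ denotes the partner of a matched agent $x$. Agent $x$ prefers $M$ over $M'$ if $x$ is matched in $M$ and unmatched in $M'$, or matched in both with $M(x)\succ_x M'(x)$. Define $\mathrm{vote}^I_x(M,M')=1$ if $x$ prefers $M$ over $M'$, $-1$ if $x$ prefers $M'$ over $M$, and $0$ otherwise, and the popularity margin $\phi^I(M,M')=\sum_{x\in W\cup F}\mathrm{vote}^I_x(M,M')$. A matching $M$ of $G^I$ is popular for $I$ if $\phi^I(M,M')\ge 0$ for every matching $M'$ of $G^I$; it is dominant for $I$ if it is popular and $\phi^I(M,M')>0$ for every matching $M'$ of $G^I$ with $|M'|>|M|$. For two instances $I_A,I_B$ on the same agent sets, a matching is robust popular (resp. robust dominant) with respect to $I_A$ and $I_B$ if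 it is popular (resp. dominant) for both $I_A$ and $I_B$. Hybrid instance: suppose $I_A,I_B$ have the same graph $G$ and differ only in the preferences of agent $x$, and let $e=\{x,y\}\in E$. Let $P^A=\{z: z\succ_x^{I_A} y\}$ and $P^B=\{z: z\succ_x^{I_B} y\}$. A hybrid instance $I_H$ of $(I_A,I_B)$ with respect to $e$ is the MatP instance on $G$ in which every agent $z\neq x$ has preference order $\succ_z^{I_A}$, and $x$ has any linear order $\succ'$ on $N_x$ such that $z\succ' y$ for all $z\in P^A\cup P^B$ and $y\succ' z$ for all $z\in N_x\setminus(P^A\cup P^B\cup\{y\})$. *)

(* Defs.v *)
From mathcomp Require Import all_boot all_order all_algebra.
Set Implicit Arguments. Unset Strict Implicit. Unset Printing Implicit Defensive.
Import Order.TTheory GRing.Theory Num.Theory.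

Section MatP.
Variables (W F : finType).
Definition agent := (W + F)%type.

Variable E : W -> F -> bool.

Definition adj (a b : agent) : bool :=
  match a, b with
  | inl w, inr f => E w f
  | inr f, inl w => E w f
  | _, _ => false
  end.

(* a preference profile: pref x a b means  a >_x b *)
Definition prefs := agent -> agent -> agent -> bool.

Definition valid_prefs (p : prefs) : Prop :=
  forall x : agent,
    (forall a, adj x a -> ~~ p x a a) /\
    (forall a b c, adj x a -> adj x b -> adj x c ->
        p x a b -> p x b c -> p x a c) /\
    (forall a b, adj x a -> adj x b -> a != b -> p x a b || p x b a).

Definition is_matching (M : {set W * F}) : Prop :=
  (forall e, e \in M -> E e.1 e.2) /\
  (forall e e', e \in M -> e' \in M -> (e.1 = e'.1 \/ e.2 = e'.2) -> e = e').

Definition in_matching (M : {set W * F}) (a b : agent) : bool :=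
  match a, b with
  | inl w, inr f => (w, f) \in M
  | inr f, inl w => (w, f) \in M
  | _, _ => false
  end.

Definition partner (M : {set W * F}) (x : agent) : option agent :=
  [pick z | in_matching M x z].

Definition prefers (p : prefs) (M M' : {set W * F}) (x : agent) : bool :=
  match partner M x, partner M' x with
  | Some z, None => true
  | Some z, Some z' => p x z z'
  | None, _ => false
  end.

Definition vote (p : prefs) (M M' : {set W * F}) (x : agent) : int :=
  (prefers p M M' x)%:Z - (prefers p M' M x)%:Z.

Definition phi (p : prefs) (M M' : {set W * F}) : int :=
  \sum_(x : agent) vote p M M' x.

Definition popular (p : prefs) (M : {set W * F}) : Prop :=
  is_matching M /\ forall M', is_matching M' -> (0 <= phi p M M')%R.

Definition dominant (p : prefs) (M : {set W * F}) : Prop :=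
  popular p M /\
  forall M', is_matching M' -> #|M| < #|M'| -> (0 < phi p M M')%R.

Definition differ_only_at (pA pB : prefs) (x : agent) : Prop :=
  forall z a b, z != x -> adj z a -> adj z b -> pA z a b = pB z a b.

Definition hybrid (pA pB pH : prefs) (x y : agent) : Prop :=
  valid_prefs pH /\
  (forall z a b, z != x -> adj z a -> adj z b -> pH z a b = pA z a b) /\
  (forall z, adj x z -> pA x z y || pB x z y -> pH x z y) /\
  (forall z, adj x z -> ~~ (pA x z y || pB x z y) -> z != y -> pH x y z).

End MatP.

(* Main.v *)
Require Import Defs.
From mathcomp Require Import all_boot all_order all_algebra.
Import Order.TTheory GRing.Theory Num.Theory.
Set Implicit Arguments. Unset Strict Implicit.

Section Aux.
Variables (W F : finType) (E : W -> F -> bool).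

Lemma in_matching_adj M (a b : agent W F) :
  is_matching E M -> in_matching M a b -> adj E a b.
Proof. by move=> [hE _]; case: a => a; case: b => b //= /hE. Qed.

Lemma partner_adj M (a b : agent W F) :
  is_matching E M -> partner M a = Some b -> adj E a b.
Proof.
by move=> hM; rewrite /partner; case: pickP => // z hz [<-]; exact: in_matching_adj hz.
Qed.

Lemma partner_xy M (x y : agent W F) :
  is_matching E M -> in_matching M x y -> partner M x = Some y.
Proof.
move=> [_ hU] hxy; rewrite /partner; case: pickP => [z hz|/(_ y)]; last by rewrite hxy.
congr Some; case: x hxy hz => a; case: y => b //; case: z => c //= h1 h2.
- by case: (hU _ _ h2 h1 (or_introl erefl)) => ->.
- by case: (hU _ _ h2 h1 (or_intror erefl)) => ->.
Qed.

Lemma vote_le (pA pH : prefs W F) x y M M' :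
 valid_prefs E pA -> valid_prefs E pH ->
 (forall z a b, z != x -> adj E z a -> adj E z b -> pH z a b = pA z a b) ->
 (forall z, adj E x z -> pA x z y -> pH x z y) ->
 adj E x y -> is_matching E M -> is_matching E M' -> in_matching M x y ->
 forall z, (vote pH M M' z <= vote pA M M' z)%R.
Proof.
move=> vA vH hoff hx axy hM hM' hxy z.
rewrite /vote /prefers.
case: (eqVneq z x) => [->|nzx].
- rewrite (partner_xy hM hxy).
  case e': (partner M' x) => [z'|]; last by [].
  have az' := partner_adj hM' e'.
  case: (eqVneq z' y) => [->|nz]; first by rewrite !subrr.
  case hzy: (pH x z' y).
  + have : ~~ pH x y z'.
      apply/negP => hyz; have [irr [tr _]] := vH x.
      by have := irr _ axy; rewrite (tr _ _ _ axy az' axy hyz hzy).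
    move/negbTE => ->.
    by case: (pA x y z'); case: (pA x z' y).
  + have hA : pA x z' y = false.
      by apply/negbTE/negP => h; rewrite (hx _ az' h) in hzy.
    have [_ [_ tot]] := vA x.
    have := tot _ _ axy az'; rewrite eq_sym nz hA orbF => /(_ isT) ->.
    by case: (pH x y z').
- case e1: (partner M z) => [a|]; case e2: (partner M' z) => [b|] //.
  by rewrite (hoff _ _ _ nzx (partner_adj hM e1) (partner_adj hM' e2))
    (hoff _ _ _ nzx (partner_adj hM' e2) (partner_adj hM e1)).
Qed.

Lemma phi_le (pA pH : prefs W F) x y M M' :
 valid_prefs E pA -> valid_prefs E pH ->
 (forall z a b, z != x -> adj E z a -> adj E z b -> pH z a b = pA z a b) ->
 (forall z, adj E x z -> pA x z y -> pH x z y) ->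
 adj E x y -> is_matching E M -> is_matching E M' -> in_matching M x y ->
 (phi pH M M' <= phi pA M M')%R.
Proof.
move=> vA vH hoff hx axy hM hM' hxy; rewrite /phi; apply: ler_sum => z _; exact: (vote_le vA vH hoff hx axy hM hM' hxy).
Qed.

Lemma transfer (pA pH : prefs W F) x y M :
 valid_prefs E pA -> valid_prefs E pH ->
 (forall z a b, z != x -> adj E z a -> adj E z b -> pH z a b = pA z a b) ->
 (forall z, adj E x z -> pA x z y -> pH x z y) ->
 adj E x y -> is_matching E M -> in_matching M x y ->
 (popular E pH M -> popular E pA M) /\ (dominant E pH M -> dominant E pA M).
Proof.
move=> vA vH hoff hx axy hM hxy; split.
- move=> [_ hp]; split=> // M' hM'.
  exact: le_trans (hp _ hM') (phi_le vA vH hoff hx axy hM hM' hxy).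
- move=> [[_ hp] hd]; split; first split=> // M' hM'.
    exact: le_trans (hp _ hM') (phi_le vA vH hoff hx axy hM hM' hxy).
  move=> M' hM' hc.
  exact: lt_le_trans (hd _ hM' hc) (phi_le vA vH hoff hx axy hM hM' hxy).
Qed.

End Aux.

Theorem lemma1 (W F : finType) (E : W -> F -> bool) (pA pB pH : prefs W F)
  (x y : agent W F) (M : {set W * F}) :
  valid_prefs E pA -> valid_prefs E pB ->
  differ_only_at E pA pB x ->
  adj E x y ->
  hybrid E pA pB pH x y ->
  is_matching E M -> in_matching M x y ->
  (popular E pH M -> popular E pA M /\ popular E pB M) /\
  (dominant E pH M -> dominant E pA M /\ dominant E pB M).
Proof.
move=> vA vB hd axy [vH [hoff [h3 _]]] hM hxy.
have hoffB : forall z a b, z != x -> adj E z a -> adj E z b -> pH z a b = pB z a b.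
  by move=> z a b nz za zb; rewrite hoff // hd.
have [PA DA] := transfer vA vH hoff (fun z az h => h3 z az (introT orP (or_introl h)))
  axy hM hxy.
have [PB DB] := transfer vB vH hoffB (fun z az h => h3 z az (introT orP (or_intror h)))
  axy hM hxy.
by split=> h; split; [apply: PA|apply: PB|apply: DA|apply: DB].
Qed.
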